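(* Let $S$ be a semigroup and $a\in S$ an idempotent with $aSa\subseteq\operatorname{Reg}(S)$; let $P=\{x\in Sa: x\,\mathscr L\,ax\}$ and let $\rho$ be the number of $\mathscr R^P$-classes contained in $\widehat R^a_a=\{x\in P: ax\ \mathscr R^{aSa}\ a\}$. Then $$\operatorname{rank}(\mathbb E(Sa))\ge\operatorname{rank}(\mathbb E(aSa))+\rho-1\quad\text{and}\quad \operatorname{idrank}(\mathbb E(Sa))\ge\operatorname{idrank}(\mathbb E(aSa))+\rho-1,$$ with equality in both if $P$ is RI-dominated.
   Context: $\mathbb E(T)$ is the subsemigroup of $T$ generated by its idempotents. $\operatorname{rank}(T)$ is the minimum cardinality of a generating set; for idempotent-generated $T$, $\operatorname{idrank}(T)$ is the minimum cardinality of a generating set consisting of idempotents. $\mathscr R^P$, $\mathscr R^{aSa}$ are Green's $\mathscr R$-relations in $P$ and $aSa$. A semigroup $T$ is RI-dominated if for every $x\in T$ there is a right identity $e$ of $T$ with $x\in eT^1$. *)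

(* Defs.v *)
Set Implicit Arguments.

Section Semigroup.
Variables (S : Type) (mul : S -> S -> S).

Inductive generated (X : S -> Prop) : S -> Prop :=
| gen_base x : X x -> generated X x
| gen_mul x y : generated X x -> generated X y -> generated X (mul x y).

Definition idempotent (e : S) : Prop := mul e e = e.

Definition Egen (T : S -> Prop) : S -> Prop :=
  generated (fun e => T e /\ idempotent e).

Definition gen_set (T X : S -> Prop) : Prop :=
  (forall x, X x -> T x) /\ (forall x, T x -> generated X x).

Definition idgen_set (T X : S -> Prop) : Prop :=
  gen_set T X /\ (forall x, X x -> idempotent x).

Definition Sa (a : S) : S -> Prop := fun x => exists s, x = mul s a.
Definition aSa (a : S) : S -> Prop := fun x => exists s, x = mul a (mul s a).

Definition regular (x : S) : Prop := exists y, mul (mul x y) x = x.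

Definition L_rel (x y : S) : Prop :=
  (x = y \/ exists s, x = mul s y) /\ (y = x \/ exists s, y = mul s x).

(* Green's R-relation in the subsemigroup T: x in yT^1 and y in xT^1 *)
Definition R_in (T : S -> Prop) (x y : S) : Prop :=
  (x = y \/ exists t, T t /\ x = mul y t) /\ (y = x \/ exists t, T t /\ y = mul x t).

Definition Pset (a : S) : S -> Prop := fun x => Sa a x /\ L_rel x (mul a x).

Definition Rhat (a : S) : S -> Prop :=
  fun x => Pset a x /\ R_in (aSa a) (mul a x) a.

Definition RP_class (a : S) (C : S -> Prop) : Prop :=
  exists x, Pset a x /\ C = (fun y => Pset a y /\ R_in (Pset a) y x).

(* the R^P-classes contained in \hat R^a_a, other than the class of a;
   their number is rho - 1 (the class of a is one of them). *)
Definition other_classes (a : S) (C : S -> Prop) : Prop :=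
  RP_class a C /\ (forall y, C y -> Rhat a y) /\ ~ C a.

Definition RI_dominated (T : S -> Prop) : Prop :=
  forall x, T x -> exists e, T e /\ (forall y, T y -> mul y e = y) /\
     (x = e \/ exists t, T t /\ x = mul e t).

End Semigroup.

Definition card_le {A B : Type} (P : A -> Prop) (Q : B -> Prop) : Prop :=
  exists f : A -> B, (forall x, P x -> Q (f x)) /\
    (forall x y, P x -> P y -> f x = f y -> x = y).

(* disjoint union of subsets, for cardinal addition *)
Definition sum_pred {A B : Type} (P : A -> Prop) (Q : B -> Prop) : A + B -> Prop :=
  fun z => match z with inl x => P x | inr y => Q y end.

(* Main.v *)
Require Import Defs.
From Stdlib Require Import ClassicalEpsilon Classical FunctionalExtensionality PropExtensionality.

Section H.
Variables (S : Type) (mul : S -> S -> S).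
Hypothesis assoc : forall x y z, mul x (mul y z) = mul (mul x y) z.
Variable a : S.
Hypothesis Ha : mul a a = a.
Local Notation "x ** y" := (mul x y) (at level 40, left associativity).

Lemma aa_r x : x ** a ** a = x ** a.
Proof. rewrite <- assoc, Ha; reflexivity. Qed.

Lemma Sa_iff x : Sa mul a x <-> x ** a = x.
Proof. split. intros [s ->]. apply aa_r. intros H; exists x; auto. Qed.

Lemma aSa_iff x : aSa mul a x <-> a ** x = x /\ x ** a = x.
Proof. split.
- intros [s ->]. rewrite !assoc, Ha, aa_r. auto.
- intros [H1 H2]. exists x. rewrite H2; auto. Qed.

Lemma gen_sub (X Z : S -> Prop) z : (forall x, X x -> generated mul Z x) ->
  generated mul X z -> generated mul Z z.
Proof. intros H G; induction G. auto. apply gen_mul; auto. Qed.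

Lemma Egen_Sa_a z : Egen mul (Sa mul a) z -> z ** a = z.
Proof. intros G; induction G as [x [Hx _]|x y _ _ _ IH].
- apply Sa_iff; auto.
- rewrite <- assoc, IH; auto. Qed.

Lemma Egen_aSa z : Egen mul (aSa mul a) z -> aSa mul a z.
Proof. intros G; induction G as [x [Hx _]|x y _ IHx _ IHy]; auto.
apply aSa_iff in IHx; apply aSa_iff in IHy; apply aSa_iff.
destruct IHx, IHy. split. rewrite assoc, H; auto. rewrite <- assoc, H2; auto. Qed.

Lemma Egen_aSa_Sa z : Egen mul (aSa mul a) z -> Egen mul (Sa mul a) z.
Proof. apply gen_sub. intros x [Hx Hi]. apply gen_base. split; auto.
apply aSa_iff in Hx; apply Sa_iff; tauto. Qed.

Lemma lemA z : Egen mul (Sa mul a) z -> forall v, a ** z ** v = a -> a ** z = a.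
Proof. intros G; induction G as [z [Hz Hi]|x y Gx IHx Gy IHy]; intros v H.
- apply Sa_iff in Hz. unfold idempotent in Hi.
  transitivity (a ** z ** (a ** z ** v)).
  + rewrite H, <- assoc, Hz; auto.
  + rewrite !assoc, <- (assoc a z a), Hz, <- (assoc a z z), Hi; auto.
- assert (Hx : a ** x = a). { apply (IHx (y ** v)). rewrite assoc; rewrite assoc in H; auto. }
  assert (Hy : a ** y = a). { apply (IHy v). rewrite assoc, Hx in H; auto. }
  rewrite assoc, Hx, Hy; auto. Qed.

Lemma lemB (X : S -> Prop) z : (forall x, X x -> Egen mul (Sa mul a) x) ->
  generated mul X z -> a ** z = a -> X z.
Proof. intros HX G; induction G as [|x y Gx IHx Gy IHy]; intros Hz; auto.
assert (Ex : Egen mul (Sa mul a) x) by (eapply gen_sub; eauto; intros; apply gen_base; auto).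
assert (Hx : a ** x = a) by (apply (lemA _ Ex y); rewrite <- assoc; exact Hz).
assert (Hy : a ** y = a) by (rewrite <- Hx at 1; rewrite <- assoc; exact Hz).
replace (x ** y) with x. auto.
rewrite <- (Egen_Sa_a _ Ex) at 2. rewrite <- assoc, Hy, (Egen_Sa_a _ Ex); auto. Qed.

Lemma a_Egen : Egen mul (Sa mul a) a.
Proof. apply gen_base; split. apply Sa_iff; auto. exact Ha. Qed.

Lemma a_Egen_aSa : Egen mul (aSa mul a) a.
Proof. apply gen_base; split. apply aSa_iff; auto. exact Ha. Qed.

Lemma phi_gen (X : S -> Prop) z : (forall x, X x -> Egen mul (Sa mul a) x) ->
  generated mul X z -> generated mul (fun y => exists x, X x /\ y = a ** x) (a ** z).
Proof. intros HX G; induction G as [x Hx|x y Gx IHx Gy IHy].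
- apply gen_base; eauto.
- assert (Ex : Egen mul (Sa mul a) x) by (eapply gen_sub; eauto; intros; apply gen_base; auto).
  replace (a ** (x ** y)) with ((a ** x) ** (a ** y)). apply gen_mul; auto.
  rewrite (assoc (a ** x)), <- (assoc a x a), (Egen_Sa_a _ Ex), assoc; auto. Qed.

Lemma phi_Egen z : Egen mul (Sa mul a) z -> Egen mul (aSa mul a) (a ** z).
Proof. intros G; induction G as [e [He Hi]|x y Gx IHx Gy IHy].
- apply Sa_iff in He. apply gen_base; split.
  + apply aSa_iff. rewrite assoc, Ha, <- assoc, He; auto.
  + unfold idempotent in *. rewrite (assoc (a ** e)), <- (assoc a e a), He, <- assoc, Hi; auto.
- replace (a ** (x ** y)) with ((a ** x) ** (a ** y)). apply gen_mul; auto.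
  rewrite (assoc (a ** x)), <- (assoc a x a), (Egen_Sa_a _ Gx), assoc; auto. Qed.

Lemma Pmul p q : Pset mul a p -> Pset mul a q -> Pset mul a (p ** q).
Proof. intros [Sp [Lp1 _]] [Sq _]. apply Sa_iff in Sq. split.
- apply Sa_iff. rewrite <- assoc, Sq; auto.
- split.
  + destruct Lp1 as [E|[s E]].
    * left. rewrite assoc, <- E; auto.
    * right. exists s. rewrite E at 1. rewrite !assoc; auto.
  + right. exists a. rewrite assoc; auto. Qed.

Lemma R_sym T x y : R_in mul T x y -> R_in mul T y x.
Proof. intros [A B]; split; auto. Qed.

Lemma R_trans x y z : R_in mul (Pset mul a) x y -> R_in mul (Pset mul a) y z ->
  R_in mul (Pset mul a) x z.
Proof. intros [A1 A2] [B1 B2]; split.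
- destruct A1 as [->|[t [Pt ->]]]; auto.
  destruct B1 as [->|[t' [Pt' ->]]]; right; eauto.
  exists (t' ** t); split. apply Pmul; auto. rewrite assoc; auto.
- destruct B2 as [->|[t [Pt ->]]]; auto.
  destruct A2 as [->|[t' [Pt' ->]]]; right; eauto.
  exists (t' ** t); split. apply Pmul; auto. rewrite assoc; auto. Qed.


Lemma other_elem C : other_classes mul a C ->
  exists e, C e /\ e ** e = e /\ a ** e = a /\ e ** a = e /\ e <> a.
Proof.
intros [[x0 [Px0 EC]] [HR Hna]].
assert (Cx0 : C x0) by (rewrite EC; split; auto; split; left; auto).
destruct (HR x0 Cx0) as [_ [_ R2]].
destruct Px0 as [Sx0 [L1 L2]]. apply Sa_iff in Sx0.
assert (Hw : exists w, x0 = w ** (a ** x0)).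
{ destruct L1 as [E|[s E]]. exists a. rewrite assoc, Ha; auto. exists s; auto. }
destruct Hw as [w Hw].
assert (Ht : exists t, aSa mul a t /\ a = a ** x0 ** t).
{ destruct R2 as [E|[t [At E]]]. exists a. split. apply aSa_iff; auto.
  rewrite <- E, Ha; auto. exists t; auto. }
destruct Ht as [t [At Ht]]. apply aSa_iff in At as [at1 ta].
set (e := x0 ** t).
assert (ew : e = w ** a).
{ unfold e. rewrite Hw at 1. rewrite <- !assoc. rewrite (assoc a x0 t), <- Ht. auto. }
assert (ae : a ** e = a) by (unfold e; rewrite assoc, <- Ht; auto).
assert (ea : e ** a = e) by (unfold e; rewrite <- assoc, ta; auto).
assert (ee : e ** e = e).
{ rewrite ew at 1 2. rewrite <- (assoc w a (w ** a)), <- ew, ae. symmetry; exact ew. }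
assert (Ce : C e).
{ rewrite EC. split.
  - split. apply Sa_iff; auto. rewrite ae. split.
    + right; exists e; auto.
    + right; exists a; auto.
  - split.
    + right. exists t. split; auto. split. apply Sa_iff; auto. split; left; auto.
    + right. exists x0. split. split. apply Sa_iff; auto. split; auto.
      rewrite ew, <- assoc, <- Hw; auto. }
exists e. repeat split; auto. intro E. apply Hna. rewrite <- E; auto.
Qed.

Lemma class_eq C C' e : other_classes mul a C -> other_classes mul a C' -> C e -> C' e -> C = C'.
Proof.
intros [[x0 [_ ->]] _] [[x1 [_ ->]] _] [Pe R0] [_ R1].
extensionality y; apply propositional_extensionality; split; intros [Py Ry]; split; auto.
- eapply R_trans. eapply R_trans. exact Ry. apply R_sym; exact R0. exact R1.
- eapply R_trans. eapply R_trans. exact Ry. apply R_sym; exact R1. exact R0.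
Qed.

Definition gsel (X : S -> Prop) (y : S) : S :=
  epsilon (inhabits a) (fun x => X x /\ a ** x = y /\ (y = a -> x = a)).
Definition hsel (C : S -> Prop) : S :=
  epsilon (inhabits a) (fun e => C e /\ e ** e = e /\ a ** e = a /\ e ** a = e /\ e <> a).

Lemma part1 X : gen_set mul (Egen mul (Sa mul a)) X ->
  gen_set mul (Egen mul (aSa mul a)) (fun y => exists x, X x /\ y = a ** x) /\
  card_le (sum_pred (fun y => exists x, X x /\ y = a ** x) (other_classes mul a)) X.
Proof.
intros [HX1 HX2].
assert (aX : X a) by (apply (lemB X a HX1 (HX2 a a_Egen)); exact Ha).
assert (gs : forall y, (exists x, X x /\ y = a ** x) ->
   X (gsel X y) /\ a ** gsel X y = y /\ (y = a -> gsel X y = a)).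
{ intros y [x [Xx Ey]]. unfold gsel. apply epsilon_spec.
  destruct (classic (y = a)) as [E|E].
  - exists a. rewrite E. auto.
  - exists x. split; auto. split; auto. intros; contradiction. }
assert (hs : forall C, other_classes mul a C ->
   C (hsel C) /\ hsel C ** hsel C = hsel C /\ a ** hsel C = a /\ hsel C ** a = hsel C /\ hsel C <> a).
{ intros C HC. unfold hsel. apply epsilon_spec. apply other_elem; auto. }
split; [split|].
- intros y [x [Xx ->]]. apply phi_Egen; auto.
- intros z Ez. pose proof (Egen_aSa _ Ez) as Az. apply aSa_iff in Az as [az _].
  rewrite <- az. apply phi_gen; auto. apply HX2. apply Egen_aSa_Sa; auto.
- exists (fun s => match s with inl y => gsel X y | inr C => hsel C end). split.
  + intros [y|C] H; simpl in *.
    * apply gs; auto.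
    * destruct (hs C H) as [Ce [ee [ae [ea na]]]].
      apply (lemB X); auto. apply HX2. apply gen_base. split; auto. apply Sa_iff; auto.
  + intros [y|C] [y'|C'] H H' E; simpl in *.
    * f_equal. destruct (gs y H) as [_ [A _]], (gs y' H') as [_ [B _]].
      rewrite <- A, <- B, E; auto.
    * exfalso. destruct (gs y H) as [_ [A B]]. destruct (hs C' H') as [_ [_ [ae [_ na]]]].
      destruct (classic (y = a)) as [Ey|Ey].
      -- apply na. rewrite <- E. auto.
      -- apply Ey. rewrite <- A, E; auto.
    * exfalso. destruct (gs y' H') as [_ [A B]]. destruct (hs C H) as [_ [_ [ae [_ na]]]].
      destruct (classic (y' = a)) as [Ey|Ey].
      -- apply na. rewrite E. auto.
      -- apply Ey. rewrite <- A, <- E; auto.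
    * f_equal. apply class_eq with (hsel C); auto. apply hs; auto. rewrite E; apply hs; auto.
Qed.

Definition Xof (Y : S -> Prop) : S -> Prop :=
  fun x => Y x \/ (x ** x = x /\ a ** x = a /\ x ** a = x).

Lemma Pa : Pset mul a a.
Proof. split. apply Sa_iff; auto. rewrite Ha. split; left; auto. Qed.

Lemma part3 Y : RI_dominated mul (Pset mul a) -> gen_set mul (Egen mul (aSa mul a)) Y ->
  gen_set mul (Egen mul (Sa mul a)) (Xof Y) /\ card_le (Xof Y) (sum_pred Y (other_classes mul a)).
Proof.
intros RI [HY1 HY2].
assert (aY : Y a).
{ apply (lemB Y a (fun x Yx => Egen_aSa_Sa _ (HY1 x Yx)) (HY2 a a_Egen_aSa)); exact Ha. }
split; [split|].
- intros x [Yx | [xx [ax xa]]]. apply Egen_aSa_Sa; auto.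
  apply gen_base; split; [apply Sa_iff; auto | exact xx].
- intros z Ez. induction Ez as [e [Se ei]| x y _ IHx _ IHy]; [|apply gen_mul; auto].
  apply Sa_iff in Se as ea. unfold idempotent in ei.
  assert (Pe : Pset mul a e).
  { split; auto. split.
    - right; exists e. rewrite assoc, ea, ei; auto.
    - right; exists a; auto. }
  destruct (RI e Pe) as [f [Pf [Rf He]]].
  pose proof Pf as [Sf _]. apply Sa_iff in Sf as fa.
  pose proof (Rf f Pf) as ff. pose proof (Rf a Pa) as af.
  assert (Xf : Xof Y f) by (right; auto).
  destruct He as [E|[t [Pt Et]]].
  + rewrite E. apply gen_base; auto.
  + assert (fe : f ** e = e) by (rewrite Et, assoc, ff; auto).
    replace e with (f ** (a ** e)).
    * apply gen_mul. apply gen_base; auto.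
      apply gen_sub with Y. intros; apply gen_base; left; auto.
      apply HY2. apply gen_base. split.
      -- apply aSa_iff. split. rewrite assoc, Ha; auto. rewrite <- assoc, ea; auto.
      -- unfold idempotent. rewrite assoc, <- (assoc a e a), ea, <- assoc, ei; auto.
    * rewrite assoc, fa, fe; auto.
- exists (fun x => match excluded_middle_informative (Y x) with
          | left _ => inl x
          | right _ => inr (fun y => Pset mul a y /\ R_in mul (Pset mul a) y x) end).
  split.
  + intros x Xx. destruct (excluded_middle_informative (Y x)) as [Yx|nY]; simpl; auto.
    destruct Xx as [Yx|[xx [ax xa]]]; [contradiction|].
    assert (Px : Pset mul a x).
    { split. apply Sa_iff; auto. rewrite ax. split.
      - right; exists x; auto.
      - right; exists a; auto. }
    split; [exists x; split; auto|split].
    * intros y [Py Ryx]. split; auto. pose proof Py as [Sy _]. apply Sa_iff in Sy as ya.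
      split.
      -- right; exists (a ** y); split. apply aSa_iff. split.
         rewrite assoc, Ha; auto. rewrite <- assoc, ya; auto. rewrite assoc, Ha; auto.
      -- destruct Ryx as [_ [Ex|[t [Pt Ex]]]].
         ++ left. rewrite <- Ex; auto.
         ++ pose proof Pt as [St _]. apply Sa_iff in St as ta.
            right; exists (a ** t); split. apply aSa_iff. split.
            rewrite assoc, Ha; auto. rewrite <- assoc, ta; auto.
            rewrite <- ax at 1. rewrite Ex.
            rewrite (assoc (a ** y) a t), <- (assoc a y a), ya, assoc; auto.
    * intros [_ [_ [E|[t [Pt E]]]]].
      -- apply nY. rewrite E; auto.
      -- apply nY. replace x with a; auto. rewrite <- ax, E, assoc, Ha; auto.
  + intros x x' Xx Xx'.
    destruct (excluded_middle_informative (Y x)) as [Yx|nY];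
    destruct (excluded_middle_informative (Y x')) as [Yx'|nY']; intros E;
    try discriminate; try (injection E; auto; fail).
    injection E as E.
    destruct Xx as [?|[xx [ax xa]]]; [contradiction|].
    destruct Xx' as [?|[xx' [ax' xa']]]; [contradiction|].
    assert (Px : Pset mul a x).
    { split. apply Sa_iff; auto. rewrite ax. split.
      - right; exists x; auto.
      - right; exists a; auto. }
    assert (H : Pset mul a x /\ R_in mul (Pset mul a) x x').
    { pose proof (equal_f E x) as E2; simpl in E2. rewrite <- E2. split; auto. split; left; auto. }
    destruct H as [_ [[Ex|[t [Pt Ex]]] _]]; auto.
    assert (x' ** x = x) by (rewrite Ex, assoc, xx'; auto).
    assert (x' ** x = x') by (rewrite <- xa' at 1; rewrite <- assoc, ax, xa'; auto).
    congruence.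
Qed.

End H.

Theorem theorem3p30 (S : Type) (mul : S -> S -> S)
  (assoc : forall x y z, mul x (mul y z) = mul (mul x y) z)
  (a : S) (Ha : idempotent mul a)
  (Hreg : forall x, aSa mul a x -> regular mul x) :
  (forall X, gen_set mul (Egen mul (Sa mul a)) X ->
     exists Y, gen_set mul (Egen mul (aSa mul a)) Y /\
       card_le (sum_pred Y (other_classes mul a)) X) /\
  (forall X, idgen_set mul (Egen mul (Sa mul a)) X ->
     exists Y, idgen_set mul (Egen mul (aSa mul a)) Y /\
       card_le (sum_pred Y (other_classes mul a)) X) /\
  (RI_dominated mul (Pset mul a) ->
    (forall Y, gen_set mul (Egen mul (aSa mul a)) Y ->
       exists X, gen_set mul (Egen mul (Sa mul a)) X /\
         card_le X (sum_pred Y (other_classes mul a))) /\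
    (forall Y, idgen_set mul (Egen mul (aSa mul a)) Y ->
       exists X, idgen_set mul (Egen mul (Sa mul a)) X /\
         card_le X (sum_pred Y (other_classes mul a)))).
Proof.
Proof.
unfold idempotent in Ha.
split; [|split].
- intros X HX. eexists. apply (@part1 S mul assoc a Ha X HX).
- intros X [HX Hi]. destruct (@part1 S mul assoc a Ha X HX) as [G C].
  eexists. split; [split|]; eauto.
  intros y [x [Xx ->]]. pose proof (Hi x Xx) as xi. unfold idempotent in *.
  assert (xa : mul x a = x) by (apply (@Egen_Sa_a S mul assoc a Ha); apply HX; auto).
  rewrite assoc, <- (assoc a x a), xa, <- assoc, xi; auto.
- intros RI. split.
  + intros Y HY. eexists. apply (@part3 S mul assoc a Ha Y RI HY).
  + intros Y [HY Hi]. destruct (@part3 S mul assoc a Ha Y RI HY) as [G C].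
    eexists. split; [split|]; eauto.
    intros x [Yx|[xx _]]; auto.
Qed.
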